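(* Let $n \geq 3$, let $C_n$ be the cycle on $n$ vertices, and let $G$ be a $k$-fold cover of $C_n$. Then $\gamma(G) \geq \frac{2}{3}\,k\,\gamma(C_n)$.
   Context: All graphs are finite, simple and undirected. A graph $G$ is a cover of a graph $F$ if there is an onto map $\pi: V(G)\to V(F)$ such that for every vertex $v$ of $G$, $\pi$ maps the neighbours of $v$ in $G$ bijectively onto the neighbours of $\pi(v)$ in $F$; the cover is $k$-fold if every fibre $\pi^{-1}(u)$ has exactly $k$ vertices. $\gamma(\cdot)$ denotes the domination number: the minimum size of a set $S$ of vertices such that every vertex not in $S$ has a neighbour in $S$. *)

(* Defs.v *)
From mathcomp Require Import all_boot.
Set Implicit Arguments. Unset Strict Implicit. Unset Printing Implicit Defensive.

Definition simple_graph (T : finType) (e : rel T) : Prop :=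
  symmetric e /\ irreflexive e.

Definition nbhd (T : finType) (e : rel T) (v : T) : {set T} := [set w | e v w].

Definition dominating (T : finType) (e : rel T) (S : {set T}) : bool :=
  [forall v, (v \notin S) ==> [exists w in S, e v w]].

Lemma dominating_exists (T : finType) (e : rel T) :
  exists m, [exists S : {set T}, dominating e S && (#|S| == m)].
Proof.
exists #|[set: T]|; apply/existsP; exists [set: T].
rewrite eqxx andbT; apply/forallP => v; by rewrite in_setT.
Qed.

Definition domination_number (T : finType) (e : rel T) : nat :=
  ex_minn (dominating_exists e).

(* The cycle C_n on vertex set 'I_n (meaningful for n >= 3):
   i ~ j iff j = i+1 mod n or i = j+1 mod n. *)
Definition cycle_rel (n : nat) : rel 'I_n :=
  fun i j => (j == i.+1 %% n :> nat) || (i == j.+1 %% n :> nat).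

Definition is_cover (TG TF : finType) (eG : rel TG) (eF : rel TF)
  (pi : TG -> TF) : Prop :=
  (forall u : TF, exists v : TG, pi v = u) /\
  (forall v : TG,
     {in nbhd eG v &, injective pi} /\ pi @: nbhd eG v = nbhd eF (pi v)).

Definition is_kfold_cover (TG TF : finType) (eG : rel TG) (eF : rel TF)
  (pi : TG -> TF) (k : nat) : Prop :=
  is_cover eG eF pi /\ (forall u : TF, #|[set v | pi v == u]| = k).

(* Main.v *)
Require Import Defs.
From mathcomp Require Import all_boot.
From mathcomp Require Import zify.

Lemma cyc_nb (n : nat) (u : 'I_n) : #|nbhd (@cycle_rel n) u| <= 2.
Proof.
case: n u => [|n] u; first by case: u.
apply: (@leq_trans #|[set (inord (u.+1 %% n.+1) : 'I_n.+1); inord ((u + n) %% n.+1)]|).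
  apply: subset_leq_card; apply/subsetP => j.
  rewrite inE /cycle_rel => /orP [/eqP H|/eqP H]; rewrite !inE; apply/orP.
    by left; apply/eqP/val_inj; rewrite /= inordK // ltn_mod.
  right; apply/eqP/val_inj; rewrite /= inordK ?ltn_mod // H.
  have jl := ltn_ord j.
  case: (ltnP j.+1 n.+1) => hj.
    rewrite (modn_small hj) addSnnS modnDr modn_small //.
  have -> : nat_of_ord j = n by lia.
  by rewrite modnn add0n modn_small.
by rewrite cards2; case: (_ != _).
Qed.

Lemma card_bigcup_le (T I : finType) (S : {set I}) (F : I -> {set T}) :
  #|\bigcup_(s in S) F s| <= \sum_(s in S) #|F s|.
Proof.
elim/big_rec2: _ => [|i y X _ H]; first by rewrite cards0.
apply: leq_trans (leq_card_setU _ _) _; by rewrite leq_add2l.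
Qed.

Lemma dom_le (T : finType) (e : rel T) (S : {set T}) :
  dominating e S -> domination_number e <= #|S|.
Proof.
move=> hS; rewrite /domination_number; case: ex_minnP => m _ Hmin.
apply: Hmin; apply/existsP; exists S; by rewrite hS eqxx.
Qed.

Lemma dom_ex (T : finType) (e : rel T) :
  exists2 S : {set T}, dominating e S & #|S| = domination_number e.
Proof.
rewrite /domination_number; case: ex_minnP => m /existsP [S /andP [h1 /eqP h2]] _.
by exists S.
Qed.

Lemma lt_div3 (n : nat) (i : 'I_n) : i %/ 3 < (n + 2) %/ 3.
Proof. have := ltn_ord i; lia. Qed.

Theorem corollary2p5 (n k : nat) (TG : finType) (eG : rel TG)
  (pi : TG -> 'I_n) :
  3 <= n ->
  simple_graph eG ->
  is_kfold_cover eG (@cycle_rel n) pi k ->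
  2 * k * domination_number (@cycle_rel n) <= 3 * domination_number eG.
Proof.
move=> n3 [sym _] [[_ hcov] hk].
have cardTG : #|TG| = n * k.
  rewrite -sum1_card (partition_big pi predT) //=.
  rewrite (eq_bigr (fun _ => k)); last first.
    move=> u _; rewrite -(hk u) -sum1_card; apply: eq_bigl => v; by rewrite inE.
  by rewrite sum_nat_const card_ord.
have deg v : #|nbhd eG v| <= 2.
  have [inj im] := hcov v.
  by rewrite -(card_in_imset inj) im cyc_nb.
have low : n * k <= 3 * domination_number eG.
  have [S domS <-] := @dom_ex TG eG.
  rewrite -cardTG.
  apply: (@leq_trans #|\bigcup_(s in S) (s |: nbhd eG s)|).
    rewrite -cardsT; apply: subset_leq_card; apply/subsetP => v _.
    case: (boolP (v \in S)) => vS.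
      by apply/bigcupP; exists v => //; rewrite !inE eqxx.
    move/forallP: domS => /(_ v); rewrite vS /= => /existsP [w /andP [wS evw]].
    apply/bigcupP; exists w => //; rewrite !inE; apply/orP; right; by rewrite sym.
  eapply leq_trans; first exact: card_bigcup_le.
  rewrite mulnC -sum_nat_const. apply: leq_sum => s _.
  by rewrite cardsU1; have := deg s; case: (_ \notin _) => /=; lia.
set D := [set i : 'I_n | i %% 3 == 0].
have domD : dominating (@cycle_rel n) D.
  apply/forallP => i; apply/implyP; rewrite inE => hi.
  have il := ltn_ord i.
  case: (boolP (i %% 3 == 1)) => h1.
    have ip : 0 < nat_of_ord i by move: h1 hi; case: (nat_of_ord i).
    have jl : i.-1 < n by lia.
    apply/existsP; exists (Ordinal jl); rewrite inE /= /cycle_rel /=.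
    apply/andP; split.
      move/eqP: h1 => h1; apply/eqP; lia.
    apply/orP; right; rewrite prednK // modn_small //.
  have jl : i.+1 %% n < n by rewrite ltn_mod; lia.
  apply/existsP; exists (Ordinal jl); rewrite inE /= /cycle_rel /= eqxx /=.
  apply/andP; split => //.
  case: (ltnP i.+1 n) => hn.
    rewrite (modn_small hn); move/eqP: hi => hi; move/eqP: h1 => h1; apply/eqP; lia.
  have -> : i.+1 = n by lia.
  by rewrite modnn.
have cardD : #|D| <= (n + 2) %/ 3.
  have inj : {in D &, injective (fun i : 'I_n => Ordinal (@lt_div3 n i))}.
    move=> x y; rewrite !inE => hx hy /(congr1 val) /= E.
    apply/val_inj => /=.
    by rewrite (divn_eq x 3) (divn_eq y 3) (eqP hx) (eqP hy) E.
  rewrite -(card_in_imset inj); apply: leq_trans (max_card _) _.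
  by rewrite card_ord.
have gC : domination_number (@cycle_rel n) <= (n + 2) %/ 3.
  exact: leq_trans (@dom_le _ _ _ domD) cardD.
apply: leq_trans low.
have h2 : 2 * domination_number (@cycle_rel n) <= n by lia.
by rewrite mulnAC; apply: leq_mul h2 (leqnn k).
Qed.
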